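(* Under the model and the scheme described in the context, for every $t\ge 1$, $$I\big(X_0;\,Q_t \,\big|\, (Q_i)_{i\le t-1}\big)=0.$$ Together with Claim 1 this gives $I\big((X_i)_{i\le 0};Q_t\mid (Q_i)_{i\le t-1}\big)=0$ for all $t\ge1$, i.e. the scheme satisfies the privacy constraint for the step privacy mode ($\mathrm{ON}$ for $t\le 0$, $\mathrm{OFF}$ for $t\ge1$).
   Context: Model. Fix $\alpha,\beta\in[0,1]$. The user's requests $\{X_t\}_{t\in\mathbb{Z}}$ form a time-homogeneous Markov chain on $\{A,B\}$ with $\Pr(X_{t+1}=B\mid X_t=A)=\alpha$ and $\Pr(X_{t+1}=A\mid X_t=B)=\beta$, and $0<\Pr(X_t=A)<1$ for every $t$. The user has mutually independent local randomness $\{S_t\}_{t\in\mathbb{Z}}$, independent of $\{X_t\}$. Scheme. Queries take values in $\{A,B,AB\}$. For $t\le 0$, $Q_t=AB$. For $t\ge1$, $Q_t$ is generated from $(X_0,X_t,Q_{t-1})$ and fresh randomness $S_t$ (so that, given $(X_0,X_t,Q_{t-1})$, $Q_t$ is conditionally independent of all other requests and queries) as follows. If $Q_{t-1}\in\{A,B\}$ then $Q_t=X_t$. If $Q_{t-1}=AB$, then the conditional law of $Q_t$ given $(X_0,X_t)$ is: (i) if $\alpha+\beta<1$: for $(X_0,X_t)=(A,A)$, $Q_t=A$ w.p. $\beta/(1-\alpha)$ and $Q_t=AB$ w.p. $(1-\alpha-\beta)/(1-\alpha)$; for $(A,B)$, $Q_t=B$; for $(B,A)$, $Q_t=A$; for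 $(B,B)$, $Q_t=B$ w.p. $\alpha/(1-\beta)$ and $Q_t=AB$ w.p. $(1-\alpha-\beta)/(1-\beta)$; (ii) if $\alpha+\beta=1$: $Q_t=X_t$; (iii) if $\alpha+\beta>1$ and $t$ even: for $(A,A)$, $Q_t=A$ w.p. $(1-\alpha)/\beta$ and $AB$ w.p. $(\alpha+\beta-1)/\beta$; for $(A,B)$, $Q_t=B$; for $(B,A)$, $Q_t=A$; for $(B,B)$, $Q_t=B$ w.p. $(1-\beta)/\alpha$ and $AB$ w.p. $(\alpha+\beta-1)/\alpha$; (iv) if $\alpha+\beta>1$ and $t$ odd: for $(A,A)$, $Q_t=A$; for $(A,B)$, $Q_t=B$ w.p. $(1-\beta)/\alpha$ and $AB$ w.p. $(\alpha+\beta-1)/\alpha$; for $(B,A)$, $Q_t=A$ w.p. $(1-\alpha)/\beta$ and $AB$ w.p. $(\alpha+\beta-1)/\beta$; for $(B,B)$, $Q_t=B$. *)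

(* Defs.v *)
From Stdlib Require Import Reals List ZArith Arith.
Open Scope R_scope.
Import ListNotations.

Inductive req := rA | rB.
Inductive qry := qA | qB | qAB.

Definition qry_of_req (x : req) : qry := match x with rA => qA | rB => qB end.
Definition qeq (q1 q2 : qry) : bool :=
  match q1, q2 with qA,qA | qB,qB | qAB,qAB => true | _,_ => false end.
Definition ind (b : bool) : R := if b then 1 else 0.

(* Markov transition kernel: P(X_{t+1}=y | X_t=x). *)
Definition trans (a b : R) (x y : req) : R :=
  match x, y with
  | rA, rA => 1 - a | rA, rB => a
  | rB, rA => b     | rB, rB => 1 - b
  end.

(* Law of Q_t given (X_0, X_t, Q_{t-1}), for t >= 1, exactly as in the scheme. *)
Definition kern (a b : R) (t : nat) (x0 xt : req) (qprev q : qry) : R :=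
  match qprev with
  | qA | qB => ind (qeq q (qry_of_req xt))
  | qAB =>
    if Rlt_dec (a + b) 1 then
      match x0, xt with
      | rA, rA => match q with qA => b / (1 - a) | qAB => (1 - a - b) / (1 - a) | qB => 0 end
      | rA, rB => ind (qeq q qB)
      | rB, rA => ind (qeq q qA)
      | rB, rB => match q with qB => a / (1 - b) | qAB => (1 - a - b) / (1 - b) | qA => 0 end
      end
    else if Rlt_dec 1 (a + b) then
      if Nat.even t then
        match x0, xt with
        | rA, rA => match q with qA => (1 - a) / b | qAB => (a + b - 1) / b | qB => 0 end
        | rA, rB => ind (qeq q qB)
        | rB, rA => ind (qeq q qA)
        | rB, rB => match q with qB => (1 - b) / a | qAB => (a + b - 1) / a | qA => 0 end
        end
      else
        match x0, xt with
        | rA, rA => ind (qeq q qA)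
        | rA, rB => match q with qB => (1 - b) / a | qAB => (a + b - 1) / a | qA => 0 end
        | rB, rA => match q with qA => (1 - a) / b | qAB => (a + b - 1) / b | qB => 0 end
        | rB, rB => ind (qeq q qB)
        end
    else ind (qeq q (qry_of_req xt))
  end.

Definition sumR {T} (l : list T) (f : T -> R) : R := fold_right Rplus 0 (map f l).

Definition all_req : list req := [rA; rB].
Definition all_qry : list qry := [qA; qB; qAB].

Fixpoint seqs {T} (alph : list T) (n : nat) : list (list T) :=
  match n with
  | O => [[]]
  | S n => flat_map (fun s => map (fun x => x :: s) alph) (seqs alph n)
  end.

Definition pX0 (p0 : R) (x : req) : R := match x with rA => p0 | rB => 1 - p0 end.

(* Weight of the steps i = k+1, ..., k+length xs, given X_k = xprev, Q_k = qprev,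
   X_0 = x0; xs = [X_{k+1};...], qs = [Q_{k+1};...]. *)
Fixpoint steps (a b : R) (k : nat) (x0 xprev : req) (qprev : qry)
         (xs : list req) (qs : list qry) : R :=
  match xs, qs with
  | x :: xs', q :: qs' =>
      trans a b xprev x * kern a b (S k) x0 x qprev q *
      steps a b (S k) x0 x q xs' qs'
  | [], [] => 1
  | _, _ => 0
  end.

(* Joint pmf of (X_0, X_1..X_t, Q_1..Q_t); Q_i = AB for i <= 0 (so Q_0 = AB). *)
Definition joint (a b p0 : R) (x0 : req) (xs : list req) (qs : list qry) : R :=
  pX0 p0 x0 * steps a b 0 x0 x0 qAB xs qs.

Definition pXQ (a b p0 : R) (x0 : req) (qs : list qry) : R :=
  sumR (seqs all_req (length qs)) (fun xs => joint a b p0 x0 xs qs).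

(* Conditional mutual information (natural log, 0 log 0 = 0)
   I(X_0 ; Q_t | Q_1..Q_{t-1}) where t = n + 1.  The queries Q_i, i <= 0,
   are the constant AB and are omitted from the conditioning (conditioning on
   a constant changes nothing). *)
Definition cmi (a b p0 : R) (n : nat) : R :=
  let pxh x0 h := sumR all_qry (fun q => pXQ a b p0 x0 (h ++ [q])) in
  let ph h := sumR all_req (fun x0 => pxh x0 h) in
  let phq h q := sumR all_req (fun x0 => pXQ a b p0 x0 (h ++ [q])) in
  sumR all_req (fun x0 => sumR (seqs all_qry n) (fun h => sumR all_qry (fun q =>
    let pj := pXQ a b p0 x0 (h ++ [q]) in
    if Req_EM_T pj 0 then 0
    else pj * ln (pj * ph h / (pxh x0 h * phq h q))))).

(* Main.v *)
Require Import Defs.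
From Stdlib Require Import Reals ZArith List Lra.
Open Scope R_scope.
Import ListNotations.

Lemma sumR_app {T} (l1 l2 : list T) f : sumR (l1 ++ l2) f = sumR l1 f + sumR l2 f.
Proof. induction l1; simpl; unfold sumR in *; simpl; try rewrite IHl1; ring. Qed.

Lemma sumR_flat_map {T U} (l : list T) (h : T -> list U) g :
  sumR (flat_map h l) g = sumR l (fun s => sumR (h s) g).
Proof. induction l; simpl. reflexivity. rewrite sumR_app, IHl. reflexivity. Qed.

Lemma sumR_plus {T} (l : list T) f g : sumR l (fun x => f x + g x) = sumR l f + sumR l g.
Proof. induction l; unfold sumR in *; simpl. ring. rewrite IHl; ring. Qed.

Lemma sumR_mult {T} (l : list T) c f : sumR l (fun x => c * f x) = c * sumR l f.
Proof. induction l; unfold sumR in *; simpl. ring. rewrite IHl; ring. Qed.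

Lemma sumR_zero {T} (l : list T) f : (forall x, f x = 0) -> sumR l f = 0.
Proof. intro H; induction l; unfold sumR in *; simpl. ring. rewrite IHl, H; ring. Qed.

Lemma sumR_ext {T} (l : list T) f g : (forall x, f x = g x) -> sumR l f = sumR l g.
Proof. intro H; induction l; unfold sumR in *; simpl. ring. rewrite IHl, H; ring. Qed.

Section S.
Variables a b : R.

Definition F k x0 xp qp qs :=
  sumR (seqs all_req (length qs)) (fun xs => steps a b k x0 xp qp xs qs).

Lemma F_nil k x0 xp qp : F k x0 xp qp [] = 1.
Proof. unfold F, sumR; simpl. ring. Qed.

Lemma F_cons k x0 xp qp q qs : F k x0 xp qp (q :: qs) =
  trans a b xp rA * kern a b (S k) x0 rA qp q * F (S k) x0 rA q qs +
  trans a b xp rB * kern a b (S k) x0 rB qp q * F (S k) x0 rB q qs.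
Proof.
  unfold F. simpl length. simpl seqs. rewrite sumR_flat_map.
  unfold all_req. simpl map.
  transitivity (sumR (seqs all_req (length qs)) (fun s =>
    trans a b xp rA * kern a b (S k) x0 rA qp q * steps a b (S k) x0 rA q s qs +
    trans a b xp rB * kern a b (S k) x0 rB qp q * steps a b (S k) x0 rB q s qs)).
  - apply sumR_ext. intro s.
    unfold sumR; simpl. ring.
  - rewrite sumR_plus, !sumR_mult. reflexivity.
Qed.

Lemma F_off qs : forall k x0 xp qp, qp <> qAB -> F k x0 xp qp qs = F 0 rA xp qA qs.
Proof.
  induction qs as [|q qs IH]; intros k x0 xp qp H.
  - rewrite !F_nil; reflexivity.
  - rewrite !F_cons.
    assert (Hk : forall x t y, kern a b t y x qp q = Defs.ind (qeq q (qry_of_req x))).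
    { intros; destruct qp; simpl; try reflexivity; congruence. }
    rewrite !Hk. simpl kern.
    destruct q; cbn [Defs.ind qeq qry_of_req].
    + rewrite (IH (S k) x0 rA qA), (IH 1%nat rA rA qA) by discriminate. ring.
    + rewrite (IH (S k) x0 rB qB), (IH 1%nat rA rB qB) by discriminate. ring.
    + ring.
Qed.

Definition flip x := match x with rA => rB | rB => rA end.
Definition fl k x := if Nat.even k then x else flip x.

Hypothesis ha : 0 <= a <= 1.
Hypothesis hb : 0 <= b <= 1.

Lemma case_i (h : a + b < 1) qs : forall k, F k rA rA qAB qs = F k rB rB qAB qs.
Proof.
  induction qs as [|q qs IH]; intro k.
  - rewrite !F_nil; reflexivity.
  - rewrite !F_cons. unfold kern.
    destruct (Rlt_dec (a + b) 1); [|lra].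
    assert (1 - a <> 0) by lra. assert (1 - b <> 0) by lra.
    simpl trans.
    destruct q; simpl Defs.ind.
    + rewrite (F_off qs (S k) rA rA qA), (F_off qs (S k) rB rA qA) by discriminate.
      field; auto.
    + rewrite (F_off qs (S k) rA rB qB), (F_off qs (S k) rB rB qB) by discriminate.
      field; auto.
    + rewrite IH. field; auto.
Qed.

Lemma even_S k : Nat.even (S k) = negb (Nat.even k).
Proof. rewrite Nat.even_succ. reflexivity. Qed.

Lemma case_iii (h : 1 < a + b) qs : forall k, F k rA (fl k rA) qAB qs = F k rB (fl k rB) qAB qs.
Proof.
  assert (a <> 0) by lra. assert (b <> 0) by lra.
  induction qs as [|q qs IH]; intro k.
  - rewrite !F_nil; reflexivity.
  - rewrite !F_cons. unfold kern.
    destruct (Rlt_dec (a + b) 1); [lra|].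
    destruct (Rlt_dec 1 (a + b)); [|lra].
    specialize (IH (S k)). unfold fl in *. rewrite even_S in *.
    destruct (Nat.even k); simpl negb in *; simpl trans; destruct q; simpl Defs.ind;
    try (rewrite (F_off qs (S k) rA rA qA), (F_off qs (S k) rB rA qA) by discriminate);
    try (rewrite (F_off qs (S k) rA rB qB), (F_off qs (S k) rB rB qB) by discriminate);
    try rewrite IH; simpl flip in *; try rewrite IH; field; auto.
Qed.

Lemma indep qs : F 0 rA rA qAB qs = F 0 rB rB qAB qs.
Proof.
  destruct (Rlt_dec (a + b) 1) as [h|h].
  - apply case_i; auto.
  - destruct (Rlt_dec 1 (a + b)) as [h'|h'].
    + apply (case_iii h' qs 0).
    + assert (a + b = 1) by lra.
      destruct qs as [|q qs]. rewrite !F_nil; reflexivity.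
      rewrite !F_cons. unfold kern.
      destruct (Rlt_dec (a + b) 1); [lra|].
      destruct (Rlt_dec 1 (a + b)); [lra|].
      simpl trans.
      destruct q; simpl Defs.ind;
      try (rewrite (F_off qs 1 rA rA qA), (F_off qs 1 rB rA qA) by discriminate);
      try (rewrite (F_off qs 1 rA rB qB), (F_off qs 1 rB rB qB) by discriminate);
      replace b with (1 - a) by lra; ring.
Qed.

Lemma fact p0 x0 qs : pXQ a b p0 x0 qs = pX0 p0 x0 * F 0 rA rA qAB qs.
Proof.
  unfold pXQ, joint. rewrite sumR_mult. change (pX0 p0 x0 * F 0 x0 x0 qAB qs = pX0 p0 x0 * F 0 rA rA qAB qs).
  destruct x0; [reflexivity| rewrite indep; reflexivity].
Qed.

End S.

Lemma ln_key N D : (D <> 0 -> N = D) -> ln (N / D) = 0.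
Proof.
  intro H. destruct (Req_EM_T D 0) as [e|e].
  - subst. unfold Rdiv. rewrite Rinv_0, Rmult_0_r. unfold ln.
    case Rlt_dec; intro r; [exfalso; lra|reflexivity].
  - rewrite (H e). rewrite Rdiv_diag by auto. apply ln_1.
Qed.

Theorem claim2 (a b : R) (p : Z -> R)
  (ha : 0 <= a <= 1) (hb : 0 <= b <= 1)
  (hrec : forall t : Z, p (t + 1)%Z = p t * (1 - a) + (1 - p t) * b)
  (hp : forall t : Z, 0 < p t < 1) :
  forall t : nat, (1 <= t)%nat -> cmi a b (p 0%Z) (t - 1) = 0.
Proof.
  intros t _. unfold cmi.
  apply sumR_zero; intro x0. apply sumR_zero; intro h. apply sumR_zero; intro q.
  cbv zeta. unfold all_req, all_qry, sumR. cbn [map fold_right].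
  rewrite !(fact a b ha hb).
  destruct (Req_EM_T _ _); [reflexivity|].
  rewrite ln_key; [ring|]. intros _. ring.
Qed.
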